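(* Fix an agent index $i$. For every $w\in\mathcal{R}_\infty^i$: (i) $Sw\in\mathcal{R}_\infty^i$; (ii) $S^{-1}w\in\mathcal{R}_\infty^i$; (iii) $S\mathcal{R}_\infty^i = \mathcal{R}_\infty^i$; (iv) $[(\Pi_i w)^\top\ w^\top]^\top\in\mathcal{O}_\infty^i$.
   Context: Agent $i$ has matrices $A_i\in\mathbb{R}^{n_i\times n_i}$, $B_i\in\mathbb{R}^{n_i\times m_i}$, $C_i\in\mathbb{R}^{q\times n_i}$ with $(A_i,B_i)$ controllable, and a constraint set $\mathbb{Z}_i\subset\mathbb{R}^{n_i+m_i}$ which is a polytope containing the origin in its interior. $K_i$ is fixed with $A_i^c := A_i + B_iK_i$ Schur. $S\in\mathbb{R}^{p\times p}$, $Q_e\in\mathbb{R}^{q\times p}$ with $S^\rho = I$ for some positive integer $\rho$, and for each eigenvalue $\lambda$ of $S$ the matrix $\begin{bmatrix} A_i-\lambda I & B_i\\ C_i & \mathbf{0}\end{bmatrix}$ has full row rank. $\Pi_i,\Gamma_i$ satisfy $A_i\Pi_i + B_i\Gamma_i = \Pi_iS$, $C_i\Pi_i = Q_e$, and $L_i := \Gamma_i - K_i\Pi_i$. Fix $\epsilon_i\in(0,1)$. $\mathcal{O}_\infty^i$ is the set of $(x,w)\in\mathbb{R}^{n_i}\times\mathbb{R}^p$ such that the sequence $x(0)=x$, $w(0)=w$, $x(k+1) = A_i^cx(k) + B_iL_iw(k)$, $w(k+1) = Sw(k)$ satisfies $[x(k)^\top\ (K_ix(k) + L_iw(k))^\top]^\top\in(1-\epsilon_i)\mathbb{Z}_i$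 for all $k\ge0$. $\mathcal{R}_\infty^i = \{w\in\mathbb{R}^p : \exists x \text{ with } [x^\top\ w^\top]^\top\in\mathcal{O}_\infty^i\}$. *)

(* Defs.v *)
From HB Require Import structures.
From mathcomp Require Import all_boot all_order all_algebra.
From mathcomp Require Import reals complex.
Set Implicit Arguments. Unset Strict Implicit. Unset Printing Implicit Defensive.
Import Order.TTheory GRing.Theory Num.Theory.
Local Open Scope ring_scope.

Section Defs.
Variable R : realType.

Definition cmx (m n : nat) (A : 'M[R]_(m, n)) : 'M[R[i]]_(m, n) :=
  map_mx (fun r : R => (r%:C)%C) A.

Definition schur (n : nat) (A : 'M[R]_n) : Prop :=
  forall l : R[i], eigenvalue (cmx A) l -> `|l| < 1.

Definition controllable (n m : nat) (A : 'M[R]_n) (B : 'M[R]_(n, m)) : Prop :=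
  row_full (\mxrow_(k < n) (A ^+ k *m B) : 'M[R]_(n, \sum_(k < n) m)).

Definition nonresonance (n m q p : nat) (A : 'M[R]_n) (B : 'M[R]_(n, m))
  (C : 'M[R]_(q, n)) (S : 'M[R]_p) : Prop :=
  forall l : R[i], eigenvalue (cmx S) l ->
    row_free (block_mx (cmx A - l%:M) (cmx B) (cmx C) (0 : 'M[R[i]]_(q, m))).

Definition polytope (d : nat) (Z : 'cV[R]_d -> Prop) : Prop :=
  (exists (r : nat) (H : 'M[R]_(r, d)) (h : 'cV[R]_r),
      forall z, Z z <-> forall j, (H *m z) j 0 <= h j 0) /\
  (exists M : R, forall z, Z z -> forall j, `|z j 0| <= M).

Definition origin_interior (d : nat) (Z : 'cV[R]_d -> Prop) : Prop :=
  exists e : R, 0 < e /\ forall z : 'cV[R]_d, (forall j, `|z j 0| < e) -> Z z.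

Definition scale_set (d : nat) (c : R) (Z : 'cV[R]_d -> Prop) : 'cV[R]_d -> Prop :=
  fun z => exists z', Z z' /\ z = c *: z'.

Definition traj (n m p : nat) (Ac : 'M[R]_n) (B : 'M[R]_(n, m))
  (L : 'M[R]_(m, p)) (S : 'M[R]_p) (x : 'cV[R]_n) (w : 'cV[R]_p) (k : nat)
  : 'cV[R]_n * 'cV[R]_p :=
  iter k (fun xw => (Ac *m xw.1 + B *m (L *m xw.2), S *m xw.2)) (x, w).

Definition Oinf (n m p : nat) (A : 'M[R]_n) (B : 'M[R]_(n, m))
  (K : 'M[R]_(m, n)) (L : 'M[R]_(m, p)) (S : 'M[R]_p) (eps : R)
  (Z : 'cV[R]_(n + m) -> Prop) (x : 'cV[R]_n) (w : 'cV[R]_p) : Prop :=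
  forall k : nat,
    let xw := traj (A + B *m K) B L S x w k in
    scale_set (1 - eps) Z (col_mx xw.1 (K *m xw.1 + L *m xw.2)).

Definition Rinf (n m p : nat) (A : 'M[R]_n) (B : 'M[R]_(n, m))
  (K : 'M[R]_(m, n)) (L : 'M[R]_(m, p)) (S : 'M[R]_p) (eps : R)
  (Z : 'cV[R]_(n + m) -> Prop) (w : 'cV[R]_p) : Prop :=
  exists x : 'cV[R]_n, Oinf A B K L S eps Z x w.

End Defs.

(* Main.v *)
Require Import Defs.
From HB Require Import structures.
From mathcomp Require Import all_boot all_order all_algebra.
From mathcomp Require Import reals complex.
From mathcomp Require Import ring lra.
Import Order.TTheory GRing.Theory Num.Theory.
Local Open Scope ring_scope.
Import ComplexField Normc.

Section Conv.
Variable R : realType.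

Lemma nC (x : R) : normc (x%:C)%C = `|x|.
Proof. rewrite /normc /= expr0n /= addr0 sqrtr_sqr //. Qed.
Lemma nlt (l : R[i]) : `|l| < 1 -> normc l < 1.
Proof. case: l => a b. rewrite normc_def /=. rewrite -[1]/((1:R)%:C)%C ltcR //. Qed.
Lemma nge0 (l : R[i]) : 0 <= normc l.
Proof. case: l => a b /=. exact: sqrtr_ge0. Qed.

Lemma bern (r : R) j : 0 <= r -> r <= 1 -> r ^+ j * (1 + j%:R * (1 - r)) <= 1.
Proof.
move=> r0 r1; elim: j => [|j IH]; first by rewrite expr0 mul0r addr0 mulr1.
have hj : 0 <= j%:R :> R by [].
have hrj : 0 <= r ^+ j by exact: exprn_ge0.
rewrite exprS -addn1 natrD.
have h2 : 0 <= (1 - r) ^+ 2 * (j%:R + 1) by apply: mulr_ge0; [exact: sqr_ge0 | lra].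
have key : r * (1 + (j%:R + 1) * (1 - r)) <= 1 + j%:R * (1 - r).
  rewrite -subr_ge0; have -> : 1 + j%:R * (1 - r) - r * (1 + (j%:R + 1) * (1 - r)) = (1 - r) ^+ 2 * (j%:R + 1) by ring. done.
have := ler_wpM2l hrj key. nra.
Qed.

Lemma geo (r : R) : 0 <= r -> r < 1 -> forall d, 0 < d ->
  exists J, forall j, (J <= j)%N -> r ^+ j < d.
Proof.
move=> r0 r1 d d0.
have s0 : 0 < 1 - r by lra.
have x0 : 0 <= 1 / ((1 - r) * d) by apply: divr_ge0 => //; nra.
exists (Num.Def.archi_bound (1 / ((1 - r) * d))) => j hj.
have hb := archi_boundP x0.
have hjj : (Num.Def.archi_bound (1 / ((1 - r) * d)))%:R <= j%:R :> R by rewrite ler_nat.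
have hB := @bern r j r0 (ltW r1).
have hrj : 0 <= r ^+ j by exact: exprn_ge0.
have : 1 / ((1 - r) * d) < j%:R by apply: lt_le_trans hjj.
rewrite ltr_pdivrMr; last by nra.
move=> h1.
rewrite ltNge; apply/negP => H.
have hj0 : 0 <= j%:R :> R by [].
have hs : 0 <= 1 + j%:R * (1 - r) by have := mulr_ge0 hj0 (ltW s0); lra.
have := ler_wpM2r hs H. move=> h3. have e1 : d * (1 + j%:R * (1 - r)) = d + j%:R * ((1 - r) * d) by ring. rewrite e1 in h3. lra.
Qed.

Definition conv0 (u : nat -> R[i]) := forall d : R, 0 < d ->
  exists N, forall k, (N <= k)%N -> normc (u k) < d.

Lemma rec_conv (l : R[i]) (u v : nat -> R[i]) : normc l < 1 -> conv0 u ->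
  (forall k, u k = v k.+1 - l * v k) -> conv0 v.
Proof.
move=> hl hu huv d d0.
set r := normc l.
have r0 : 0 <= r := nge0 l.
have [N HN] : exists N, forall k, (N <= k)%N -> normc (u k) < (1 - r) * d / 2.
  by apply: hu; apply: divr_gt0 => //; apply: mulr_gt0 => //; rewrite subr_gt0.
set c := normc (v N).
have c0 : 0 <= c := nge0 _.
have claim : forall j, normc (v (N + j)%N) <= r ^+ j * c + d / 2.
  elim=> [|j IH]; first by rewrite addn0 expr0 mul1r -/c; lra.
  have e : v (N + j.+1)%N = l * v (N + j)%N + u (N + j)%N.
    by rewrite addnS huv; ring.
  rewrite e; apply: le_trans (le_normcD _ _) _.
  rewrite normcM -/r.
  have := HN (N + j)%N (leq_addr _ _).
  have := ler_wpM2l r0 IH.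
  rewrite exprS. nra.
have hpos : 0 < d / (2 * (c + 1)) by apply: divr_gt0 => //; lra.
have [J HJ] := @geo r r0 hl _ hpos.
exists (N + J)%N => k hk.
have -> : k = (N + (k - N))%N by rewrite subnKC // (leq_trans (leq_addr _ _) hk).
apply: le_lt_trans (claim _) _.
have hj : (J <= k - N)%N by rewrite leq_subRL // (leq_trans (leq_addr _ _) hk).
have := HJ _ hj.
have := exprn_ge0 (k - N) r0.
set t := r ^+ (k - N).
move=> t0.
rewrite ltr_pdivlMr; last by nra.
nra.
Qed.


Section Mx.
Variable n' : nat.
Variable A : 'M[R[i]]_n'.+1.

Definition Pm (s : seq R[i]) : 'M[R[i]]_n'.+1 :=
  foldr (fun z M => (A - z%:M) *m M) 1%:M s.

Lemma horner_prod s : horner_mx A (\prod_(z <- s) ('X - z%:P)) = Pm s.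
Proof.
elim: s => [|z s IH]; first by rewrite big_nil rmorph1.
by rewrite big_cons rmorphM /= IH rmorphB /= horner_mx_X horner_mx_C mulmxE.
Qed.

Lemma key s : (forall z, z \in s -> normc z < 1) -> forall (a : 'rV[R[i]]_n'.+1) (b : 'cV[R[i]]_n'.+1),
  conv0 (fun k => (a *m Pm s *m A ^+ k *m b) 0 0) -> conv0 (fun k => (a *m A ^+ k *m b) 0 0).
Proof.
elim: s => [|z s IH] hs a b.
  by rewrite /= mulmx1.
move=> h.
have hz : normc z < 1 by apply: hs; rewrite inE eqxx.
have hs' : forall y, y \in s -> normc y < 1 by move=> y hy; apply: hs; rewrite inE hy orbT.
have := IH hs' (a *m (A - z%:M)) b.
rewrite /=.
have h' : conv0 (fun k => (a *m (A - z%:M) *m Pm s *m A ^+ k *m b) 0 0).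
  move=> d d0; have [N HN] := h d d0; exists N => k hk.
  by rewrite -[a *m _ *m Pm s]mulmxA; exact: HN.
move=> /(_ h') h2.
apply: (@rec_conv z _ _ hz h2) => k.
rewrite mulmxBr mul_mx_scalar mulmxBl mulmxBl -scalemxAl -scalemxAl.
rewrite exprS -mulmxE !mulmxA.
by rewrite !mxE.
Qed.

Lemma conv_pow : (forall l, eigenvalue A l -> normc l < 1) ->
  forall (a : 'rV[R[i]]_n'.+1) (b : 'cV[R[i]]_n'.+1), conv0 (fun k => (a *m A ^+ k *m b) 0 0).
Proof.
move=> hA a b.
have [r hr] := closed_field_poly_normal (char_poly A).
rewrite (monicP (char_poly_monic A)) scale1r in hr.
apply: (@key r).
  move=> z hz; apply: hA; rewrite eigenvalue_root_char hr root_prod_XsubC //.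
have -> : Pm r = 0 by rewrite -horner_prod -hr Cayley_Hamilton.
move=> d d0; exists 0%N => k _.
by rewrite mulmx0 !mul0mx mxE normc0.
Qed.

End Mx.


Lemma cmx_mul m n p (M : 'M[R]_(m, n)) (N : 'M[R]_(n, p)) : cmx (M *m N) = cmx M *m cmx N.
Proof. by rewrite /cmx map_mxM. Qed.

Lemma cmx_pow n (M : 'M[R]_n) k : cmx (M ^+ k) = cmx M ^+ k.
Proof.
elim: k => [|k IH]; first by rewrite !expr0 /cmx map_mx1.
by rewrite !exprS -!mulmxE cmx_mul IH.
Qed.

Lemma real_conv n (Ac : 'M[R]_n) : schur Ac -> forall (f : 'rV[R]_n) (e : 'cV[R]_n) d,
  0 < d -> exists N, forall k, (N <= k)%N -> `|(f *m Ac ^+ k *m e) 0 0| < d.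
Proof.
case: n Ac => [|n'] Ac hs f e d d0.
  by exists 0%N => k _; rewrite [f]thinmx0 !mul0mx mxE normr0.
have hA : forall l, eigenvalue (cmx Ac) l -> normc l < 1 by move=> l /hs /nlt.
have [N HN] := @conv_pow n' (cmx Ac) hA (cmx f) (cmx e) d d0.
exists N => k hk; have := HN k hk.
by rewrite -cmx_pow -!cmx_mul /cmx mxE nC.
Qed.

End Conv.

Section Main.
Variable R : realType.
Variables (n m p : nat) (A : 'M[R]_n) (B : 'M[R]_(n, m)) (K : 'M[R]_(m, n))
  (L : 'M[R]_(m, p)) (S : 'M[R]_p) (eps : R) (Z : 'cV[R]_(n + m) -> Prop).

Lemma oinf_shift x w : Oinf A B K L S eps Z x w ->
  Oinf A B K L S eps Z ((A + B *m K) *m x + B *m (L *m w)) (S *m w).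
Proof. by move=> H k; have := H k.+1; rewrite /traj iterSr. Qed.

Lemma rinf_S w : Rinf A B K L S eps Z w -> Rinf A B K L S eps Z (S *m w).
Proof. by case=> x Hx; exists ((A + B *m K) *m x + B *m (L *m w)); exact: oinf_shift. Qed.

Lemma rinf_pow j w : Rinf A B K L S eps Z w -> Rinf A B K L S eps Z (S ^+ j *m w).
Proof.
move=> h; elim: j => [|j IH]; first by rewrite expr0 mul1mx.
by rewrite exprS -mulmxE -mulmxA; exact: rinf_S.
Qed.

Lemma traj_err (Pi : 'M[R]_(n, p)) x w :
  (A + B *m K) *m Pi + B *m L = Pi *m S -> forall k,
  (traj (A + B *m K) B L S x w k).2 = S ^+ k *m w /\
  (traj (A + B *m K) B L S x w k).1 = Pi *m (S ^+ k *m w) + (A + B *m K) ^+ k *m (x - Pi *m w).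
Proof.
move=> hsyl; rewrite /traj; elim=> [|k [IH2 IH1]] /=.
  by rewrite !expr0 !mul1mx addrC subrK.
rewrite IH2 IH1; split; first by rewrite exprS -mulmxE -mulmxA.
set Ac := A + B *m K; set v := S ^+ k *m w.
rewrite mulmxDr addrAC (mulmxA Ac Pi) (mulmxA B L) -mulmxDl hsyl -(mulmxA Pi S).
rewrite [Ac ^+ k.+1]exprS [S ^+ k.+1]exprS -!mulmxE -!mulmxA //.
Qed.


Lemma sc_char r (H : 'M[R]_(r, n + m)) (h : 'cV[R]_r) (c : R) :
  (forall z, Z z <-> forall j, (H *m z) j 0 <= h j 0) -> 0 < c ->
  forall z, scale_set c Z z <-> forall j, (H *m z) j 0 <= c * h j 0.
Proof.
move=> hZ c0 z; split.
  case=> z' [Zz' ->] j; rewrite -scalemxAr mxE.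
  by apply: ler_wpM2l; [exact: ltW | exact: (proj1 (hZ z') Zz')].
move=> hz; exists (c^-1 *: z); split; last by rewrite scalerA mulfV ?scale1r // gt_eqF.
apply/hZ => j; rewrite -scalemxAr mxE mulrC ler_pdivrMr //.
by rewrite mulrC.
Qed.

Lemma oinf_Pi (Pi : 'M[R]_(n, p)) rho x w :
  polytope Z -> schur (A + B *m K) -> (0 < rho)%N -> S ^+ rho = 1%:M ->
  (A + B *m K) *m Pi + B *m L = Pi *m S -> 0 < eps < 1 ->
  Oinf A B K L S eps Z x w -> Oinf A B K L S eps Z (Pi *m w) w.
Proof.
move=> [[r [H [h hZ]]] _] hs hrho hS hsyl /andP[e0 e1] Hx k.
have c0 : 0 < 1 - eps by rewrite subr_gt0.
have [T2 T1] := traj_err Pi (Pi *m w) w hsyl k.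
rewrite /= T1 T2 subrr mulmx0 addr0.
apply/(@sc_char r H h (1 - eps) hZ c0) => j.
apply/ler_addgt0Pr => d d0.
set Ac := A + B *m K.
set g := row j (H *m col_mx 1%:M K).
have [N0 HN0] := @real_conv R n Ac hs g (x - Pi *m w) d d0.
set N := (k + N0 * rho)%N.
have hN : (N0 <= N)%N by rewrite /N (leq_trans (leq_pmulr _ hrho)) // leq_addl.
have hSN : S ^+ N = S ^+ k by rewrite /N exprD mulnC exprM hS expr1n mulr1.
have := proj1 (@sc_char r H h (1 - eps) hZ c0 _) (Hx N) j.
have [U2 U1] := traj_err Pi x w hsyl N.
rewrite /= U1 U2 hSN.
set v := S ^+ k *m w.
set D := Ac ^+ N *m (x - Pi *m w).
have ez : col_mx (Pi *m v + D) (K *m (Pi *m v + D) + L *m v) =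
          col_mx (Pi *m v) (K *m (Pi *m v) + L *m v) + col_mx 1%:M K *m D.
  by rewrite mul_col_mx mul1mx add_col_mx mulmxDr addrAC.
rewrite ez mulmxDr mxE.
have -> : (H *m (col_mx 1%:M K *m D)) j 0 = (g *m Ac ^+ N *m (x - Pi *m w)) 0 0.
  by rewrite /g -!row_mul [RHS]mxE /D !mulmxA.
have := HN0 N hN.
rewrite ltr_norml => /andP[t1 t2].
lra.
Qed.

End Main.

Theorem lemma4 (R : realType) (n m q p rho : nat)
  (A : 'M[R]_n) (B : 'M[R]_(n, m)) (C : 'M[R]_(q, n))
  (Z : 'cV[R]_(n + m) -> Prop) (K : 'M[R]_(m, n))
  (S : 'M[R]_p) (Qe : 'M[R]_(q, p))
  (Pi : 'M[R]_(n, p)) (Gam : 'M[R]_(m, p)) (eps : R) :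
  controllable A B ->
  polytope Z -> origin_interior Z ->
  schur (A + B *m K) ->
  (0 < rho)%N -> S ^+ rho = 1%:M ->
  nonresonance A B C S ->
  A *m Pi + B *m Gam = Pi *m S -> C *m Pi = Qe ->
  0 < eps < 1 ->
  let L := Gam - K *m Pi in
  (forall w : 'cV[R]_p, Rinf A B K L S eps Z w ->
      Rinf A B K L S eps Z (S *m w) /\
      Rinf A B K L S eps Z (invmx S *m w) /\
      Oinf A B K L S eps Z (Pi *m w) w) /\
  (forall v : 'cV[R]_p,
      Rinf A B K L S eps Z v <-> exists w, Rinf A B K L S eps Z w /\ v = S *m w).
Proof.
move=> _ hpol _ hs hrho hS _ hsyl0 _ heps L.
have hsyl : (A + B *m K) *m Pi + B *m L = Pi *m S.
  rewrite /L mulmxDl mulmxBr -mulmxA -hsyl0.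
  by rewrite -addrA [B *m Gam - _]addrC !addrA addrK.
have hmul : S *m S ^+ rho.-1 = 1%:M by rewrite -hS -(prednK hrho) exprS mulmxE prednK.
have hSu : S \in unitmx by case: (mulmx1_unit hmul).
have hinv : invmx S = S ^+ rho.-1.
  by have := mulKmx hSu (S ^+ rho.-1); rewrite hmul mulmx1.
have hii : forall w, Rinf A B K L S eps Z w -> Rinf A B K L S eps Z (invmx S *m w).
  by move=> w hw; rewrite hinv; exact: rinf_pow.
split.
  move=> w hw; split; first exact: rinf_S.
  split; first exact: hii.
  case: hw => x Hx; exact: (@oinf_Pi R n m p A B K L S eps Z Pi rho x w hpol hs hrho hS hsyl heps Hx).
move=> v; split.
  move=> hv; exists (invmx S *m v); split; first exact: hii.
  by rewrite mulmxA mulmxV // mul1mx.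
by case=> w [hw ->]; exact: rinf_S.
Qed.
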